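(* Let $A$ be a wqo and let $A_1,\dots,A_m$ be a quasi-incomparable family of subsets of $A$. Then $\mathbf{w}(A)\ge \mathbf{w}(A_m)+\mathbf{w}(A_{m-1})+\dots+\mathbf{w}(A_1)$, where $+$ is ordinary ordinal addition.
   Context: A wqo is a quasi-order with no infinite bad sequence (a sequence $x_0,x_1,\dots$ is bad if there are no $i<j$ with $x_i\le x_j$). $x\perp y$ means neither $x\le y$ nor $y\le x$. The width $\mathbf{w}(A)$ of a wqo $A$ is the rank of the forest $\mathrm{Inco}(A)$ of nonempty finite sequences of pairwise incomparable elements ordered by initial segment, i.e. $\mathbf{w}(A)=\sup_{s}(r(s)+1)$ where $r(s)=\sup\{r(t)+1: t \text{ child of } s\}$; subsets of $A$ carry the induced order. For subsets $S,T\subseteq A$, write $S\perp T$ if $s\perp t$ for all $s\in S,t\in T$. A sequence $A_1,\dots,A_m$ of subsets of $A$ is a quasi-incomparable family if for every $i\in[1,m]$ and every finite $Y\subseteq A_1\cup\dots\cup A_{i-1}$ there exists $A_i'\subseteq A_i$ such that $A_i'$ (with the induced order) is order-isomorphic to $A_i$ and $A_i'\perp Y$. (This notion depends on the numbering of the $A_i$.) *)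

(* Defs.v *)
(* Ordinals are represented as well-founded trees
   (Brouwer-style ordinals with arbitrary Type-indexed suprema). *)
From Stdlib Require Import List ClassicalEpsilon.
Import ListNotations.

(* [osup I f] denotes the least ordinal strictly greater than every [f i],
   i.e. sup_{i in I} (f i + 1). *)
Inductive Ord : Type :=
  | osup : forall (I : Type), (I -> Ord) -> Ord.

Definition ozero : Ord := osup Empty_set (fun e => match e with end).

(* ordinal order: osup I f <= osup J g  iff  every f i < osup J g,
   iff every f i <= some g j *)
Fixpoint ole (a b : Ord) : Prop :=
  match a, b with
  | osup X f, osup Y g => forall i : X, exists j : Y, ole (f i) (g j)
  end.

(* ordinary ordinal addition, by recursion on the right argument:
   a + 0 = a, a + sup_j (g j + 1) = sup_j (a + g j + 1) *)
Fixpoint oadd (a b : Ord) : Ord :=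
  match b with
  | osup Y g =>
      match a with
      | osup X f =>
          osup (X + Y)%type
            (fun k => match k with
                      | inl i => f i
                      | inr j => oadd a (g j)
                      end)
      end
  end.

Section QO.
Variable T : Type.
Variable le : T -> T -> Prop.

Definition quasi_order : Prop :=
  (forall x, le x x) /\ (forall x y z, le x y -> le y z -> le x z).

Definition wqo : Prop :=
  quasi_order /\ forall f : nat -> T, exists i j, i < j /\ le (f i) (f j).

Definition incomp (x y : T) : Prop := ~ le x y /\ ~ le y x.

Definition incomp_sets (S U : T -> Prop) : Prop :=
  forall x y, S x -> U y -> incomp x y.

Definition inco_node (S : T -> Prop) (s : list T) : Prop :=
  s <> [] /\ Forall S s /\ ForallOrdPairs incomp s.

Definition inco_child (S : T -> Prop) (t s : list T) : Prop :=
  inco_node S t /\ exists x, t = s ++ [x].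

Definition rank_acc (S : T -> Prop) : forall s, Acc (inco_child S) s -> Ord :=
  Fix_F (fun _ => Ord)
    (fun s rec => osup {t | inco_child S t s}
                       (fun t => rec (proj1_sig t) (proj2_sig t))).

(* total version (the forest is well-founded whenever the order is a wqo;
   the default value is irrelevant in that case) *)
Definition rank (S : T -> Prop) (s : list T) : Ord :=
  match excluded_middle_informative (Acc (inco_child S) s) with
  | left H => rank_acc S s H
  | right _ => ozero
  end.

Definition width (S : T -> Prop) : Ord :=
  osup {s | inco_node S s} (fun s => rank S (proj1_sig s)).

Definition order_iso (S U : T -> Prop) : Prop :=
  exists (f : {x | S x} -> {x | U x}) (g : {x | U x} -> {x | S x}),
    (forall a, g (f a) = a) /\ (forall b, f (g b) = b) /\
    (forall a a', le (proj1_sig a) (proj1_sig a') <->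
                  le (proj1_sig (f a)) (proj1_sig (f a'))).

Definition quasi_incomparable_family (m : nat) (Afam : nat -> T -> Prop) : Prop :=
  forall i, 1 <= i <= m ->
    forall Y : list T,
      (forall y, In y Y -> exists j, 1 <= j < i /\ Afam j y) ->
      exists A' : T -> Prop,
        (forall x, A' x -> Afam i x) /\
        order_iso A' (Afam i) /\
        incomp_sets A' (fun y => In y Y).

Fixpoint width_sum (Afam : nat -> T -> Prop) (n : nat) : Ord :=
  match n with
  | 0 => ozero
  | S n' => oadd (width (Afam n)) (width_sum Afam n')
  end.

End QO.

(* Main.v *)
Require Import Defs.
From Stdlib Require Import List.
From Stdlib Require Import Arith Classical ClassicalEpsilon FunctionalExtensionality ProofIrrelevance Lia.
Import ListNotations.


Lemma ole_refl a : ole a a.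
Proof. induction a as [X f IH]; simpl; intro i; exists i; apply IH. Qed.

Lemma ole_trans a b c : ole a b -> ole b c -> ole a c.
Proof.
  revert b c; induction a as [X f IH]; intros [Y g] [Z h]; simpl; intros H1 H2 i.
  destruct (H1 i) as [j Hj]. destruct (H2 j) as [k Hk]. exists k. eapply IH; eauto.
Qed.

Lemma ole_comp_aux a : forall X f (i : X), f i = a -> ole a (osup X f).
Proof.
  induction a as [Y g IH]; intros X f i E; simpl; intro y; exists i; rewrite E.
  apply (IH y Y g y eq_refl).
Qed.

Lemma ole_comp X f (i : X) : ole (f i) (osup X f).
Proof. eapply ole_comp_aux; eauto. Qed.

Lemma ole_zero a : ole ozero a.
Proof. destruct a; simpl; intros []. Qed.

Lemma oadd_zero_le a c : ole a c -> ole (oadd a ozero) c.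
Proof. destruct a as [X f], c as [Z h]; unfold ozero; simpl; intros H [i|[]]; apply H. Qed.

Lemma ole_zero_add b : ole b (oadd ozero b).
Proof. induction b as [Y g IH]; unfold ozero in *; simpl; intro y; exists (inr y); apply IH. Qed.

Lemma oadd_mono_r a b b' : ole b b' -> ole (oadd a b) (oadd a b').
Proof.
  destruct a as [X f]. revert b'; induction b as [Y g IH]; intros [Y' g'] H; simpl in *;
  intros [i|y].
  - exists (inl i); apply ole_refl.
  - destruct (H y) as [y' Hy]; exists (inr y'); apply IH; auto.
Qed.

Lemma oadd_assoc a b c : ole (oadd a (oadd b c)) (oadd (oadd a b) c).
Proof.
  revert a b; induction c as [Z h IH]; intros [X f] [Y g]; simpl; intros [i|[y|z]].
  - exists (inl (inl i)); apply ole_refl.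
  - exists (inl (inr y)); apply ole_refl.
  - exists (inr z); apply IH.
Qed.

Lemma FOP_suffix {A} (R : A -> A -> Prop) l1 l2 :
  ForallOrdPairs R (l1 ++ l2) -> ForallOrdPairs R l2.
Proof. induction l1; simpl; auto. intro H; inversion H; auto. Qed.

Lemma FOP_prefix {A} (R : A -> A -> Prop) l1 l2 :
  ForallOrdPairs R (l1 ++ l2) -> ForallOrdPairs R l1.
Proof.
  induction l1; simpl; intro H; [constructor|]. inversion H; subst.
  constructor; auto. apply Forall_app in H2; tauto.
Qed.

Lemma FOP_app {A} (R : A -> A -> Prop) l1 l2 :
  ForallOrdPairs R l1 -> ForallOrdPairs R l2 ->
  (forall a b, In a l1 -> In b l2 -> R a b) -> ForallOrdPairs R (l1 ++ l2).
Proof.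
  induction l1; simpl; intros H1 H2 H; auto. inversion H1; subst.
  constructor.
  - apply Forall_app; split; auto. apply Forall_forall; intros; apply H; auto.
  - apply IHl1; auto.
Qed.

Lemma FOP_map {A B} (R : A -> A -> Prop) (R' : B -> B -> Prop) (f : A -> B) P l :
  Forall P l -> (forall x y, P x -> P y -> R x y -> R' (f x) (f y)) ->
  ForallOrdPairs R l -> ForallOrdPairs R' (map f l).
Proof.
  intros HP Hf; induction l; simpl; intro H; constructor; inversion H; subst;
  inversion HP; subst; auto.
  apply Forall_forall; intros y Hy. apply in_map_iff in Hy as [z [<- Hz]].
  rewrite Forall_forall in H2, H5. apply Hf; auto.
Qed.

Lemma FOP_mid {A} (R : A -> A -> Prop) l1 a l2 b :
  ForallOrdPairs R (l1 ++ a :: l2) -> In b l2 -> R a b.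
Proof.
  intros H Hb. apply FOP_suffix in H. inversion H; subst.
  rewrite Forall_forall in H2; auto.
Qed.

Section X.
End X.

Lemma rank_unfold T le S s :
  Acc (inco_child T le S) s ->
  rank T le S s = osup {t | inco_child T le S t s} (fun t => rank T le S (proj1_sig t)).
Proof.
  intro H. unfold rank at 1.
  destruct (excluded_middle_informative (Acc (inco_child T le S) s)) as [H'|n]; [|contradiction].
  unfold rank_acc. rewrite <- Fix_F_eq. f_equal.
  apply functional_extensionality_dep; intros [t ht]. simpl. unfold rank.
  destruct (excluded_middle_informative (Acc (inco_child T le S) t)) as [H2|n2].
  - unfold rank_acc. rewrite (proof_irrelevance _ (Acc_inv H' ht) H2). reflexivity.
  - exfalso; apply n2; exact (Acc_inv H' ht).
Qed.

Lemma incomp_irrefl T le x : quasi_order T le -> ~ incomp T le x x.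
Proof. intros [r _] [h _]; apply h, r. Qed.

Lemma acc_all T le : wqo T le -> forall s, Acc (inco_child T le (fun _ => True)) s.
Proof.
  intros [Hq Hw] s0. apply NNPP; intro H0.
  set (C := inco_child T le (fun _ => True)).
  assert (step : forall s, ~ Acc C s -> {t | C t s /\ ~ Acc C t}).
  { intros s Hs. apply constructive_indefinite_description.
    apply NNPP; intro Hn. apply Hs. constructor. intros t Ht.
    apply NNPP; intro Ht'. apply Hn; eauto. }
  set (c := fix c (n : nat) : {s | ~ Acc C s} :=
         match n with
         | 0 => exist _ s0 H0
         | S n => let p := c n in
                  exist _ (proj1_sig (step _ (proj2_sig p))) (proj2 (proj2_sig (step _ (proj2_sig p))))
         end).
  assert (Hc : forall n, C (proj1_sig (c (S n))) (proj1_sig (c n))).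
  { intro n. simpl. exact (proj1 (proj2_sig (step _ (proj2_sig (c n))))). }
  assert (Hx : forall n, {x | proj1_sig (c (S n)) = proj1_sig (c n) ++ [x]}).
  { intro n. apply constructive_indefinite_description. exact (proj2 (Hc n)). }
  set (x := fun n => proj1_sig (Hx n)).
  assert (Hd : forall i d, exists u, proj1_sig (c (i + d)) = proj1_sig (c i) ++ u).
  { intros i d; induction d as [|d [u Hu]].
    - exists []; rewrite Nat.add_0_r, app_nil_r; reflexivity.
    - exists (u ++ [x (i + d)]). rewrite Nat.add_succ_r.
      rewrite (proj2_sig (Hx (i + d))). fold (x (i+d)). rewrite Hu, app_assoc; reflexivity. }
  destruct (Hw x) as [i [j [Hij Hle]]].
  destruct (Hd (S i) (j - S i)) as [u Hu].
  replace (S i + (j - S i)) with j in Hu by lia.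
  pose proof (proj1 (Hc j)) as [_ [_ Hnode]].
  rewrite (proj2_sig (Hx j)) in Hnode. fold (x j) in Hnode.
  rewrite Hu, (proj2_sig (Hx i)) in Hnode. fold (x i) in Hnode.
  rewrite <- !app_assoc in Hnode. simpl in Hnode.
  assert (In (x j) (u ++ [x j])) by (apply in_or_app; simpl; auto).
  destruct (FOP_mid _ _ _ _ _ Hnode H) as [Hn _]. contradiction.
Qed.

Lemma child_U T le v a :
  ForallOrdPairs (incomp T le) (v ++ [a]) -> inco_child T le (fun _ => True) (v ++ [a]) v.
Proof.
  intro H. split; [split; [|split]|eauto].
  - intro E; symmetry in E; exact (app_cons_not_nil _ _ _ E).
  - apply Forall_forall; auto.
  - exact H.
Qed.

Lemma desc_mono T le (Hacc : forall s, Acc (inco_child T le (fun _ => True)) s) :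
  forall w v, ForallOrdPairs (incomp T le) (v ++ w) ->
  ole (rank T le (fun _ => True) (v ++ w)) (rank T le (fun _ => True) v).
Proof.
  induction w as [|a w IH]; intros v H.
  - rewrite app_nil_r; apply ole_refl.
  - replace (v ++ a :: w) with ((v ++ [a]) ++ w) in * by (rewrite <- app_assoc; reflexivity).
    eapply ole_trans; [apply IH; exact H|].
    rewrite (rank_unfold _ _ _ v (Hacc v)).
    pose proof (child_U T le v a (FOP_prefix _ _ _ H)) as Hc.
    exact (ole_comp _ (fun t : {t | inco_child T le (fun _ => True) t v} =>
                         rank T le (fun _ => True) (proj1_sig t)) (exist (fun t => inco_child T le (fun _ => True) t v) _ Hc)).
Qed.

Section Emb.
End Emb.

Lemma node_map T le (B : T -> Prop) (phi : T -> T) s t :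
  ForallOrdPairs (incomp T le) s ->
  (forall x, B x -> forall y, In y s -> incomp T le (phi x) y) ->
  (forall x y, B x -> B y -> le (phi x) (phi y) -> le x y) ->
  Forall B t -> ForallOrdPairs (incomp T le) t ->
  ForallOrdPairs (incomp T le) (s ++ map phi t).
Proof.
  intros Hs Hx Hr HB Ht. apply FOP_app; auto.
  - eapply FOP_map; eauto. intros x y Bx By [h1 h2]; split; intro h; [apply h1|apply h2]; auto.
  - intros a b Ha Hb. apply in_map_iff in Hb as [x [<- Hxt]].
    rewrite Forall_forall in HB. destruct (Hx x (HB x Hxt) a Ha); split; auto.
Qed.

Lemma embed T le (Hacc : forall s, Acc (inco_child T le (fun _ => True)) s)
  (B : T -> Prop) (phi : T -> T) s a :
  ForallOrdPairs (incomp T le) s ->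
  (forall x, B x -> forall y, In y s -> incomp T le (phi x) y) ->
  (forall x y, B x -> B y -> le (phi x) (phi y) -> le x y) ->
  (forall t, Forall B t -> ForallOrdPairs (incomp T le) t ->
     ole a (rank T le (fun _ => True) (s ++ map phi t))) ->
  forall t, Forall B t -> ForallOrdPairs (incomp T le) t ->
     ole (oadd a (rank T le B t)) (rank T le (fun _ => True) (s ++ map phi t)).
Proof.
  intros Hs Hx Hr Ha t HB HF.
  destruct (classic (Acc (inco_child T le B) t)) as [Hat|Hat].
  2:{ unfold rank at 1. destruct (excluded_middle_informative _); [contradiction|].
      apply oadd_zero_le; auto. }
  induction Hat as [t Hacc' IH].
  rewrite (rank_unfold _ _ _ t (Acc_intro _ Hacc')).
  pose proof (Ha t HB HF) as Hat.
  rewrite (rank_unfold _ _ _ _ (Hacc _)) in *.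
  destruct a as [X f]. simpl. simpl in Hat. intros [i|[t' Ht']].
  - exact (Hat i).
  - pose proof Ht' as [[_ [HB' HF']] [x ->]].
    assert (Hc : inco_child T le (fun _ => True) (s ++ map phi (t ++ [x])) (s ++ map phi t)).
    { rewrite map_app, app_assoc. apply child_U. rewrite <- app_assoc. change [phi x] with (map phi [x]). rewrite <- map_app.
      eapply node_map; eauto. }
    exists (exist (fun u => inco_child T le (fun _ => True) u (s ++ map phi t)) _ Hc). simpl. apply IH; auto.
Qed.

Lemma embed_width T le (Hacc : forall s, Acc (inco_child T le (fun _ => True)) s)
  (B : T -> Prop) (phi : T -> T) s a :
  ForallOrdPairs (incomp T le) s ->
  (forall x, B x -> forall y, In y s -> incomp T le (phi x) y) ->
  (forall x y, B x -> B y -> le (phi x) (phi y) -> le x y) ->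
  (forall t, Forall B t -> ForallOrdPairs (incomp T le) t ->
     ole a (rank T le (fun _ => True) (s ++ map phi t))) ->
  ole (oadd a (width T le B)) (rank T le (fun _ => True) s).
Proof.
  intros Hs Hx Hr Ha.
  pose proof (Ha [] (Forall_nil _) (FOP_nil _)) as H0. simpl in H0. rewrite app_nil_r in H0.
  unfold width. rewrite (rank_unfold _ _ _ _ (Hacc s)) in *.
  destruct a as [X f]. simpl. simpl in H0. intros [i|[t [Hne [HB HF]]]].
  - exact (H0 i).
  - destruct t as [|x t0]; [contradiction|].
    pose proof (node_map T le B phi s (x :: t0) Hs Hx Hr HB HF) as Hn.
    simpl in Hn. replace (s ++ phi x :: map phi t0) with ((s ++ [phi x]) ++ map phi t0) in Hn
      by (rewrite <- app_assoc; reflexivity).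
    exists (exist (fun u => inco_child T le (fun _ => True) u s) _ (child_U T le s (phi x) (FOP_prefix _ _ _ Hn))). simpl.
    eapply ole_trans.
    + apply (embed T le Hacc B phi s (osup X f) Hs Hx Hr Ha (x :: t0) HB HF).
    + simpl. replace (s ++ phi x :: map phi t0) with ((s ++ [phi x]) ++ map phi t0)
        by (rewrite <- app_assoc; reflexivity).
      apply desc_mono; auto.
Qed.

Lemma G T le m Afam (Hacc : forall s, Acc (inco_child T le (fun _ => True)) s)
  (Hqi : quasi_incomparable_family T le m Afam) :
  forall k, k <= m -> forall a,
  (forall s, ForallOrdPairs (incomp T le) s ->
     (forall y, In y s -> exists j, 1 <= j <= k /\ Afam j y) ->
     ole a (rank T le (fun _ => True) s)) ->
  ole (oadd a (width_sum T le Afam k)) (rank T le (fun _ => True) []).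
Proof.
  induction k as [|k IH]; intros Hk a H.
  - simpl. apply oadd_zero_le. apply H; [constructor|intros y []].
  - simpl. eapply ole_trans; [apply oadd_assoc|]. apply IH; [lia|].
    intros s Hs Hin.
    destruct (Hqi (S k) ltac:(lia) s) as [A' [Hsub [[f [g [Hgf [Hfg Hord]]]] Hinc]]].
    { intros y Hy. destruct (Hin y Hy) as [j [Hj Hj']]. exists j; split; [lia|auto]. }
    set (phi := fun x => match excluded_middle_informative (Afam (S k) x) with
                         | left h => proj1_sig (g (exist _ x h))
                         | right _ => x end).
    assert (Hphi : forall x (h : Afam (S k) x), phi x = proj1_sig (g (exist _ x h))).
    { intros x h. unfold phi. destruct (excluded_middle_informative _) as [h'|n]; [|contradiction].
      rewrite (proof_irrelevance _ h' h). reflexivity. }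
    assert (HA' : forall x, Afam (S k) x -> A' (phi x)).
    { intros x h. rewrite (Hphi x h). exact (proj2_sig _). }
    assert (Hx : forall x, Afam (S k) x -> forall y, In y s -> incomp T le (phi x) y).
    { intros x h y Hy. apply Hinc; auto. }
    assert (Hr : forall x y, Afam (S k) x -> Afam (S k) y -> le (phi x) (phi y) -> le x y).
    { intros x y hx hy. rewrite (Hphi x hx), (Hphi y hy).
      intro Hl. pose proof (proj1 (Hord (g (exist _ x hx)) (g (exist _ y hy))) Hl) as Hl'.
      rewrite !Hfg in Hl'. exact Hl'. }
    apply (embed_width T le Hacc (Afam (S k)) phi s a Hs Hx Hr).
    intros t HB HF. apply H.
    + eapply node_map; eauto.
    + intros y Hy. apply in_app_or in Hy as [Hy|Hy].
      * destruct (Hin y Hy) as [j [Hj Hj']]. exists j; split; [lia|auto].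
      * apply in_map_iff in Hy as [x [<- Hxt]]. rewrite Forall_forall in HB.
        exists (S k); split; [lia|]. apply Hsub, HA', HB, Hxt.
Qed.

Theorem mainTheorem2 (T : Type) (le : T -> T -> Prop) (m : nat)
    (Afam : nat -> T -> Prop) :
  wqo T le ->
  quasi_incomparable_family T le m Afam ->
  ole (width_sum T le Afam m) (width T le (fun _ => True)).
Proof.
  intros Hw Hqi. pose proof (acc_all T le Hw) as Hacc.
  pose proof (G T le m Afam Hacc Hqi m (le_n _) ozero (fun s _ _ => ole_zero _)) as HG.
  eapply ole_trans; [apply ole_zero_add|]. eapply ole_trans; [exact HG|].
  rewrite (rank_unfold _ _ _ _ (Hacc [])). unfold width. simpl.
  intros [t Ht]. exists (exist _ t (proj1 Ht)). apply ole_refl.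
Qed.
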